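(* Let $J_1,J_2\subseteq I$ be ideals in a Noetherian ring $R$ such that both pairs $J_1\subseteq I$ and $J_2\subseteq I$ are Aluffi torsion-free. Then $J_1+J_2\subseteq I$ is Aluffi torsion-free if and only if the pair of image ideals $\overline{J_1}\subseteq\overline I$ in $\overline R=R/J_2$ is Aluffi torsion-free.
   Context: A pair of ideals $J\subseteq I$ in a ring $R$ is called Aluffi torsion-free if $J\cap I^n=JI^{n-1}$ for all $n\ge1$ (with $I^0=R$). *)

(* Defs.v *)
From HB Require Import structures.
From mathcomp Require Import all_boot all_order all_algebra.
Set Implicit Arguments. Unset Strict Implicit. Unset Printing Implicit Defensive.
Import GRing.Theory.
Local Open Scope ring_scope.

Section Ideals.
Variable R : comPzRingType.

Definition is_ideal (I : R -> Prop) : Prop :=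
  [/\ I 0, (forall x y, I x -> I y -> I (x + y)) & (forall r x, I x -> I (r * x))].

Definition subset_ideal (I J : R -> Prop) : Prop := forall x, I x -> J x.
Definition eq_ideal (I J : R -> Prop) : Prop := forall x, I x <-> J x.

Definition ideal_cap (I J : R -> Prop) : R -> Prop := fun x => I x /\ J x.

Definition ideal_add (I J : R -> Prop) : R -> Prop :=
  fun x => exists a b, [/\ I a, J b & x = a + b].

Definition ideal_mul (I J : R -> Prop) : R -> Prop :=
  fun x => exists n (a b : 'I_n -> R),
    [/\ forall i, I (a i), forall i, J (b i) & x = \sum_(i < n) a i * b i].

Fixpoint ideal_pow (I : R -> Prop) (n : nat) : R -> Prop :=
  match n with
  | 0%N => fun _ => True
  | n'.+1 => ideal_mul (ideal_pow I n') I
  end.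

Definition noetherian : Prop :=
  forall C : nat -> R -> Prop,
    (forall k, is_ideal (C k)) ->
    (forall k, subset_ideal (C k) (C k.+1)) ->
    exists N, forall k, (N <= k)%N -> eq_ideal (C k) (C N).

Definition aluffi_torsion_free (J I : R -> Prop) : Prop :=
  forall n : nat, (1 <= n)%N ->
    eq_ideal (ideal_cap J (ideal_pow I n)) (ideal_mul J (ideal_pow I n.-1)).

End Ideals.

Definition image_set (R S : Type) (f : R -> S) (I : R -> Prop) : S -> Prop :=
  fun y => exists x, I x /\ y = f x.

(* Main.v *)
Require Import Defs.
From HB Require Import structures.
From mathcomp Require Import all_boot all_order all_algebra.
Import GRing.Theory.
Local Open Scope ring_scope.

Set Implicit Arguments.
Section L.
Variable R : comPzRingType.
Implicit Types A B C I J : R -> Prop.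

Lemma mul_ideal A B : is_ideal A -> is_ideal (ideal_mul A B).
Proof.
case=> A0 AD AM; split.
- exists 0%N, (fun _ => 0), (fun _ => 0); split; [by case|by case|by rewrite big_ord0].
- move=> x y [n [a [b [Ha Hb ->]]]] [m [a' [b' [Ha' Hb' ->]]]].
  exists (n + m)%N,
    (fun i => match split i with inl j => a j | inr k => a' k end),
    (fun i => match split i with inl j => b j | inr k => b' k end); split.
  + by move=> i; case: (split i).
  + by move=> i; case: (split i).
  + rewrite big_split_ord /=; congr (_ + _); apply: eq_bigr => i _.
    * by rewrite (unsplitK (inl i)).
    * by rewrite (unsplitK (inr i)).
- move=> r x [n [a [b [Ha Hb ->]]]].
  exists n, (fun i => r * a i), b; split => //; first by move=> i; apply: AM.
  by rewrite mulr_sumr; apply: eq_bigr => i _; rewrite mulrA.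
Qed.

Lemma mul_sub A B C : is_ideal C -> (forall x y, A x -> B y -> C (x * y)) ->
  subset_ideal (ideal_mul A B) C.
Proof.
case=> C0 CD CM H x [n [a [b [Ha Hb ->]]]].
by apply: (big_ind C) => // i _; apply: H.
Qed.

Lemma mul_in A B x y : A x -> B y -> ideal_mul A B (x * y).
Proof.
move=> Ax By; exists 1%N, (fun _ => x), (fun _ => y); split => //.
by rewrite big_ord1.
Qed.

Lemma mul_mono A A' B B' : subset_ideal A A' -> subset_ideal B B' ->
  subset_ideal (ideal_mul A B) (ideal_mul A' B').
Proof.
move=> HA HB x [n [a [b [Ha Hb ->]]]]; exists n, a, b; split => // i.
- exact: HA.
- exact: HB.
Qed.

Lemma pow_ideal I n : is_ideal I -> is_ideal (ideal_pow I n).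
Proof.
move=> HI; case: n => [|n] /=; first by split.
apply: mul_ideal; elim: n => [|n IH] /=; first by split.
exact: mul_ideal.
Qed.

Lemma ideal_sub A x y : is_ideal A -> A x -> A y -> A (x - y).
Proof.
case=> A0 AD AM Ax Ay; apply: AD => //.
by rewrite -mulN1r; apply: AM.
Qed.

Lemma lower J I n : is_ideal J -> is_ideal I -> subset_ideal J I ->
  subset_ideal (ideal_mul J (ideal_pow I n)) (ideal_cap J (ideal_pow I n.+1)).
Proof.
move=> HJ HI JI x Hx; split.
- apply: (mul_sub HJ _ Hx) => a b Ja _; rewrite mulrC; by case: HJ => _ _; apply.
- apply: (mul_sub (pow_ideal _ HI) _ Hx) => a b Ja Pb /=.
  by rewrite mulrC; apply: mul_in => //; apply: JI.
Qed.

End L.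

Section Im.
Variables (R S : comPzRingType) (pi : {rmorphism R -> S}).
Hypothesis surj : forall y : S, exists x : R, pi x = y.
Implicit Types A B C I J : R -> Prop.

Lemma image_ideal A : is_ideal A -> is_ideal (image_set pi A).
Proof.
case=> A0 AD AM; split.
- by exists 0; rewrite rmorph0.
- by move=> _ _ [x [Ax ->]] [y [Ay ->]]; exists (x + y); rewrite rmorphD; split => //; apply: AD.
- move=> r _ [x [Ax ->]]; have [r0 <-] := surj r.
  by exists (r0 * x); rewrite rmorphM; split => //; apply: AM.
Qed.

Lemma image_mono A B : subset_ideal A B -> subset_ideal (image_set pi A) (image_set pi B).
Proof. by move=> H _ [x [Ax ->]]; exists x; split => //; apply: H. Qed.

Lemma image_mul_sub A B :
  subset_ideal (image_set pi (ideal_mul A B)) (ideal_mul (image_set pi A) (image_set pi B)).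
Proof.
move=> _ [_ [[n [a [b [Ha Hb ->]]]] ->]].
exists n, (fun i => pi (a i)), (fun i => pi (b i)); split.
- by move=> i; exists (a i).
- by move=> i; exists (b i).
- by rewrite rmorph_sum; apply: eq_bigr => i _; rewrite rmorphM.
Qed.

Lemma mul_image_sub A B : is_ideal A ->
  subset_ideal (ideal_mul (image_set pi A) (image_set pi B)) (image_set pi (ideal_mul A B)).
Proof.
move=> HA; apply: mul_sub; first by apply: image_ideal; apply: mul_ideal.
move=> _ _ [x [Ax ->]] [y [By ->]]; exists (x * y); rewrite rmorphM; split => //.
exact: mul_in.
Qed.

Lemma image_pow I n : is_ideal I ->
  subset_ideal (image_set pi (ideal_pow I n)) (ideal_pow (image_set pi I) n) /\
  subset_ideal (ideal_pow (image_set pi I) n) (image_set pi (ideal_pow I n)).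
Proof.
move=> HI; elim: n => [|n [IH1 IH2]] /=.
- by split => // y _; have [x <-] := surj y; exists x.
- split.
  + move=> y Hy; apply: (mul_mono IH1 (fun _ h => h)); exact: image_mul_sub.
  + move=> y Hy; apply: mul_image_sub; first exact: pow_ideal.
    exact: (mul_mono IH2 (fun _ h => h)).
Qed.

End Im.

Lemma add_ideal (R : comPzRingType) (A B : R -> Prop) :
  is_ideal A -> is_ideal B -> is_ideal (ideal_add A B).
Proof.
case=> A0 AD AM [B0 BD BM]; split.
- by exists 0, 0; rewrite addr0.
- move=> _ _ [a [b [Aa Bb ->]]] [a' [b' [Aa' Bb' ->]]].
  exists (a + a'), (b + b'); split; [exact: AD|exact: BD|].
  by rewrite addrACA.
- move=> r _ [a [b [Aa Bb ->]]]; exists (r * a), (r * b); split; [exact: AM|exact: BM|].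
  by rewrite mulrDr.
Qed.

Theorem proposition2p5 (R : comPzRingType) (I J1 J2 : R -> Prop) :
  noetherian R ->
  is_ideal I -> is_ideal J1 -> is_ideal J2 ->
  subset_ideal J1 I -> subset_ideal J2 I ->
  aluffi_torsion_free J1 I -> aluffi_torsion_free J2 I ->
  forall (S : comPzRingType) (pi : {rmorphism R -> S}),
    (forall y : S, exists x : R, pi x = y) ->
    (forall x : R, pi x = 0 <-> J2 x) ->
    (aluffi_torsion_free (ideal_add J1 J2) I <->
     aluffi_torsion_free (image_set pi J1) (image_set pi I)).
Proof.
move=> _ HI HJ1 HJ2 J1I J2I _ TF2 S pi surj ker.
have HJ := add_ideal HJ1 HJ2.
have JI : subset_ideal (ideal_add J1 J2) I.
  move=> _ [a [b [Ja Jb ->]]]; case: HI => _ ID _; apply: ID; [exact: J1I|exact: J2I].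
have iJ1 := image_ideal pi surj HJ1.
have iI := image_ideal pi surj HI.
split => H [|m] // _.
- move=> y; split; last first.
    by apply: lower => //; apply: image_mono.
  move=> [[x [J1x ->]] Hy].
  have [x' [Px' e]] := (image_pow pi surj m.+1 HI).2 _ Hy.
  have Jx' : ideal_add J1 J2 x'.
    exists x, (x' - x); split => //; last by rewrite addrC subrK.
    by apply/ker; rewrite rmorphB -e subrr.
  have Mx := (H m.+1 isT x').1 (conj Jx' Px').
  have Hm' : ideal_mul (image_set pi (ideal_add J1 J2)) (image_set pi (ideal_pow I m)) (pi x').
    by apply: image_mul_sub; exists x'.
  rewrite e; apply: (mul_mono _ _ Hm').
  + move=> _ [_ [[a [b [Ja Jb ->]]] ->]]; exists a; split => //.
    by rewrite rmorphD (proj2 (ker b) Jb) addr0.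
  + exact: (image_pow pi surj m HI).1.
- move=> x; split; last by apply: lower.
  move=> [[a [b [J1a J2b ->]]] Px].
  have h1 : image_set pi J1 (pi (a + b)).
    by exists a; split => //; rewrite rmorphD (proj2 (ker b) J2b) addr0.
  have h2 : ideal_pow (image_set pi I) m.+1 (pi (a + b)).
    by apply: (image_pow pi surj m.+1 HI).1; exists (a + b).
  have := (H m.+1 isT (pi (a + b))).1 (conj h1 h2).
  move=> /(mul_mono (fun _ h => h) (image_pow pi surj m HI).2).
  move=> /(mul_image_sub pi surj HJ1) [c [Mc e]].
  have Pc := (@lower R J1 I m HJ1 HI J1I c Mc).2.
  have J2d : J2 (a + b - c) by apply/ker; rewrite rmorphB e subrr.
  have Pd : ideal_pow I m.+1 (a + b - c) by apply: ideal_sub => //; apply: pow_ideal.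
  have Md := (TF2 m.+1 isT (a + b - c)).1 (conj J2d Pd).
  have -> : a + b = c + (a + b - c) by rewrite [c + _]addrC subrK.
  case: (mul_ideal (ideal_pow I m) HJ) => _ MD _; apply: MD.
  + apply: (mul_mono _ (fun _ h => h) Mc) => y Jy; exists y, 0; split => //.
    * by case: HJ2.
    * by rewrite addr0.
  + apply: (mul_mono _ (fun _ h => h) Md) => y Jy; exists 0, y; split => //.
    * by case: HJ1.
    * by rewrite add0r.
Qed.
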